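(* For every group $G$, $S(G) = \bigcap_{N \lhd G,\ |G:N|<\infty} F_N(G)$.
   Context: $S(G) := \{ x \in G : x^{|G:H|} \in H \text{ for every subgroup } H \leqslant G \text{ of finite index}\}$. For a group $X$, the Fitting subgroup $F(X)$ is the subgroup generated by all nilpotent normal subgroups of $X$. For $N \lhd G$, $F_N(G)$ denotes the preimage of $F(G/N)$ under the projection $G \to G/N$. *)

(* Defs.v *)
(* abstract (possibly infinite) groups via mathcomp's
   [groupType] from boot/monoid.v; subsets of a group are Prop-valued
   predicates [G -> Prop]. *)
From HB Require Import structures.
From mathcomp Require Import all_boot.
From mathcomp Require Import monoid.

Set Implicit Arguments.
Unset Strict Implicit.
Unset Printing Implicit Defensive.

Local Open Scope group_scope.

Section GroupDefs.
Variable G : groupType.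

Definition is_subgroup (H : G -> Prop) : Prop :=
  [/\ H 1, (forall x y, H x -> H y -> H (x * y)) & (forall x, H x -> H x^-1)].

Definition is_normal (N : G -> Prop) : Prop :=
  is_subgroup N /\ (forall x g, N x -> N (x ^ g)).

(* |G : H| = n : there are exactly n left cosets of H, i.e. a left
   transversal s of length n (every x lies in some coset s_i H, and the
   cosets s_i H are pairwise distinct). *)
Definition index_eq (H : G -> Prop) (n : nat) : Prop :=
  exists s : seq G,
    [/\ size s = n,
        (forall x, exists2 i, i < n & H ((nth 1 s i)^-1 * x)) &
        (forall i j, i < n -> j < n ->
           H ((nth 1 s i)^-1 * nth 1 s j) -> i = j)].

Definition finite_index (H : G -> Prop) : Prop := exists n, index_eq H n.

Definition S_set : G -> Prop :=
  fun x => forall (H : G -> Prop) (n : nat),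
    is_subgroup H -> index_eq H n -> H (x ^+ n).

Definition gen (A : G -> Prop) : G -> Prop :=
  fun x => forall K : G -> Prop, is_subgroup K -> (forall y, A y -> K y) -> K x.

Definition commgrp (A B : G -> Prop) : G -> Prop :=
  gen (fun z => exists x y, [/\ A x, B y & z = [~ x, y]]).

(* lower central series of K: gamma_1 = K (index 0), gamma_{i+1} = [gamma_i, K] *)
Fixpoint lcs (K : G -> Prop) (n : nat) : G -> Prop :=
  match n with
  | 0 => K
  | n'.+1 => commgrp (lcs K n') K
  end.

Definition is_nilpotent (K : G -> Prop) : Prop :=
  is_subgroup K /\ exists n, forall x, lcs K n x -> x = 1.

Definition Fitting : G -> Prop :=
  gen (fun x => exists K : G -> Prop, [/\ is_normal K, is_nilpotent K & K x]).

End GroupDefs.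

Definition is_hom (G Q : groupType) (f : G -> Q) : Prop :=
  forall x y, f (x * y) = f x * f y.

(* F_N(G): the preimage of F(G/N) under the projection G -> G/N.  The
   quotient G/N is represented by any group Q together with a surjective
   homomorphism f : G -> Q whose kernel is exactly N (Q is then G/N up to
   isomorphism, and the preimage f^-1(F(Q)) does not depend on the choice
   of (Q, f)); x \in F_N(G) iff f x \in F(Q) for every such realization. *)
Definition F_N (G : groupType) (N : G -> Prop) : G -> Prop :=
  fun x => forall (Q : groupType) (f : G -> Q),
    is_hom f -> (forall y, exists z, f z = y) ->
    (forall z, f z = 1 <-> N z) ->
    @Fitting Q (f x).

(* Main.v *)
Require Import Defs.
From HB Require Import structures.
From mathcomp Require Import all_boot.
From mathcomp Require Import monoid.
From mathcomp Require Import all_fingroup all_solvable zify.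
From Stdlib Require Import ClassicalEpsilon.
Set Implicit Arguments. Unset Strict Implicit. Unset Printing Implicit Defensive.
Local Open Scope group_scope.

Lemma pnat_leq_dvd (p a b : nat) : p.-nat a -> p.-nat b -> a <= b -> a %| b.
Proof.
move=> pa pb; have [i ea] := p_natP pa; have [j eb] := p_natP pb.
rewrite ea eb => le.
case: (leqP i j) => [ij|ji]; first exact: dvdn_exp2l.
move: pa le; rewrite ea; case: p {ea eb pb} => [|[|p]].
- by rewrite exp0n ?(leq_ltn_trans _ ji).
- by rewrite !exp1n.
- by move=> _; rewrite leq_exp2l // leqNgt ji.
Qed.

Lemma ppow (T : finGroupType) (p : nat) (P K : {group T}) (y : T) :
  p.-group P -> P <| [set: T] -> y \in P -> y ^+ #|[set: T] : K| \in K.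
Proof.
move=> pP nPT yP.
pose A := <[y]>%G; pose B := (A :&: K)%G.
have sAP : A \subset P by rewrite cycle_subG.
have sBA : B \subset A := subsetIl _ _.
have yB : y ^+ #|A : B| \in B.
  have nBA : A \subset 'N(B).
    by apply: sub_abelian_norm; [apply: cycle_abelian | apply: subsetIl].
  have yN : y \in 'N(B) := subsetP nBA y (cycle_id y).
  apply: coset_idr; first exact: groupX.
  rewrite morphX //= -card_quotient //; apply: expg_cardG.
  exact: mem_quotient (cycle_id y).
have nPK : K \subset 'N(P) by rewrite (subset_trans (subsetT K)) // normal_norm.
pose M := (P <*> K)%G.
have eM : P <*> K = P * K := norm_joinEr nPK.
have sKM : K \subset M := joing_subr _ _.
have dm : #|A : B| %| #|[set: T] : K|.
  apply: dvdn_trans (indexSg sKM (subsetT M)).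
  apply: (@pnat_leq_dvd p).
  - exact: pnat_dvd (dvdn_indexg A B) (pgroupS sAP pP).
  - have e1 := mul_cardG P K; have e2 := Lagrange (subsetIl P K).
    have e3 := Lagrange sKM; rewrite indexgI in e2.
    have eMK : #|M : K| = #|P : K|.
      have hK : 0 < #|K| := cardG_gt0 K.
      have hPK : 0 < #|P :&: K| := cardG_gt0 (P :&: K)%G.
      have e3' : (#|K| * #|M : K| = #|(P * K)%g|)%N by rewrite -eM.
      apply/eqP; rewrite -(eqn_pmul2l hK) -(eqn_pmul2r hPK); apply/eqP.
      rewrite e3' -e1 -[in LHS]e2 /=; nia.
    by rewrite eMK; apply: pnat_dvd (dvdn_indexg P K) pP.
  - have e1 := Lagrange sBA; have e2 := mul_cardG A K.
    have e3 := Lagrange sKM.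
    have sAKM : #|A * K| <= #|M| by apply: subset_leq_card; rewrite /= eM mulgSS.
    have hK : 0 < #|K| := cardG_gt0 K.
    have hB : 0 < #|B| := cardG_gt0 B.
    rewrite -(leq_pmul2r hK) -(leq_pmul2r hB).
    rewrite -e3 in sAKM.
    have eB : #|B| = #|A :&: K| by []. rewrite -e1 -eB in e2. nia.
rewrite -(divnK dm) mulnC expgM; apply: groupX.
exact: (subsetP (subsetIr A K)).
Qed.

Lemma FA (T : finGroupType) (t : T) (K : {group T}) :
  t \in 'F([set: T]) -> t ^+ #|[set: T] : K| \in K.
Proof.
move=> tF; rewrite -(prod_constt (t ^+ _)); apply: group_prod => p _.
rewrite consttX.
apply: (@ppow _ p 'O_p([set: T])%G); [exact: pcore_pgroup | exact: pcore_normal|].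
rewrite /= -p_core_Fitting.
have hall := nilpotent_pcore_Hall p (Fitting_nil [set: T]).
rewrite (mem_normal_Hall hall (pcore_normal _ _)) ?p_elt_constt //.
by apply: (subsetP _ _ (cycle_constt p t)); rewrite cycle_subG.
Qed.

Lemma FB (T : finGroupType) (t : T) :
  (forall K : {group T}, t ^+ #|[set: T] : K| \in K) -> t \in 'F([set: T]).
Proof.
move=> H; rewrite -(prod_constt t); apply: group_prod => p _.
apply: (subsetP (pcore_sub p 'F([set:T]))); rewrite p_core_Fitting.
rewrite /pcore; apply/bigcapP => M maxM.
have sylM : p.-Sylow([set: T]) M by rewrite -max_pgroup_Sylow.
set u := t.`_p; set m := #|[set: T] : M|.
have uM : u ^+ m \in M.
  rewrite /u -consttX; apply: (subsetP _ _ (cycle_constt p _)).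
  by rewrite cycle_subG; apply: H.
have co : coprime #|<[u]>| m.
  case/and3P: sylM => _ _ pi'; exact: pnat_coprime (p_elt_constt p t) pi'.
by rewrite -(expgK co (cycle_id u)); apply: groupX.
Qed.

Set Implicit Arguments. Unset Strict Implicit. Unset Printing Implicit Defensive.
Local Open Scope group_scope.

Definition pb (P : Prop) : bool :=
  if excluded_middle_informative P then true else false.
Lemma pbP (P : Prop) : reflect P (pb P).
Proof. by rewrite /pb; case: excluded_middle_informative => h; constructor. Qed.

Section Gen.
Variable G : groupType.
Implicit Types (A K H : G -> Prop) (x y : G).

Lemma gen_in A y : A y -> gen A y.
Proof. by move=> Ay K _ /(_ y Ay). Qed.

Lemma gen_min A K : is_subgroup K -> (forall y, A y -> K y) -> forall x, gen A x -> K x.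
Proof. by move=> sK AK x /(_ K sK AK). Qed.

Lemma gen_subgroup A : is_subgroup (gen A).
Proof.
split.
- by move=> K [K1 _ _].
- by move=> x y gx gy K sK AK; case: (sK) => _ KM _; apply: KM; [apply: gx|apply: gy].
- by move=> x gx K sK AK; case: (sK) => _ _ KV; apply: KV; apply: gx.
Qed.

Lemma lcs_subgroup K n : is_subgroup K -> is_subgroup (lcs K n).
Proof. by case: n => [|n] //= _; apply: gen_subgroup. Qed.

Lemma index_eq_ext A B n : (forall x, A x <-> B x) -> index_eq A n -> index_eq B n.
Proof.
move=> AB [s [sz cov dis]]; exists s; split => //.
- by move=> x; case: (cov x) => i lt hi; exists i => //; apply/AB.
- by move=> i j li lj /AB; apply: dis.
Qed.

Lemma idx_le H n m : is_subgroup H -> index_eq H n -> index_eq H m -> n <= m.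
Proof.
move=> [H1 HM HV] [s [sn scov sdis]] [t [tm tcov tdis]].
case: (tcov 1) => j0 lj0 _.
pose f (i : 'I_n) : 'I_m :=
  odflt (Ordinal lj0) [pick j : 'I_m | pb (H ((nth 1 t j)^-1 * nth 1 s i))].
have fP i : H ((nth 1 t (f i))^-1 * nth 1 s i).
  rewrite /f; case: pickP => [j /pbP //|no].
  case: (tcov (nth 1 s i)) => j lj hj.
  by move: (no (Ordinal lj)) => /pbP [].
have finj : injective f.
  move=> i i' e; apply: val_inj; apply: sdis; [exact: ltn_ord|exact: ltn_ord|].
  have := HM _ _ (HV _ (fP i)) (fP i'); rewrite e.
  by rewrite invMg invgK -mulgA mulVKg.
by have := leq_card f finj; rewrite !card_ord.
Qed.


Lemma idx_uniq H n m : is_subgroup H -> index_eq H n -> index_eq H m -> n = m.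
Proof. by move=> sH a b; apply/eqP; rewrite eqn_leq !(idx_le sH). Qed.

End Gen.

Section Hom.
Variables (G Q : groupType) (f : G -> Q).
Hypothesis fM : is_hom f.

Lemma hom1 : f 1 = 1.
Proof. by apply: (@mulgI _ (f 1)); rewrite -fM !mulg1. Qed.

Lemma homV x : f x^-1 = (f x)^-1.
Proof. by apply: (@mulgI _ (f x)); rewrite -fM !mulgV hom1. Qed.

Lemma homX x n : f (x ^+ n) = f x ^+ n.
Proof. by elim: n => [|n IH]; rewrite ?hom1 // !expgS fM IH. Qed.

Lemma homJ x y : f (x ^ y) = f x ^ f y.
Proof. by rewrite !conjgE !fM homV. Qed.

Lemma homR x y : f [~ x, y] = [~ f x, f y].
Proof. by rewrite !commgEl fM homV homJ. Qed.

End Hom.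


Set Implicit Arguments. Unset Strict Implicit. Unset Printing Implicit Defensive.
Local Open Scope group_scope.

Section Act.
Variables (G : groupType) (H : G -> Prop) (n : nat) (s : seq G).
Hypothesis sH : is_subgroup H.
Hypothesis cov : forall x, exists2 i, i < n & H ((nth 1 s i)^-1 * x).
Hypothesis dis : forall i j, i < n -> j < n -> H ((nth 1 s i)^-1 * nth 1 s j) -> i = j.

Let H1 : H 1. Proof. by case: sH. Qed.
Let HM x y : H x -> H y -> H (x * y). Proof. by case: sH => _ h _; apply: h. Qed.
Let HV x : H x -> H x^-1. Proof. by case: sH => _ _ h; apply: h. Qed.

Definition rho (g : G) (i : 'I_n) : 'I_n :=
  odflt i [pick j : 'I_n | pb (H ((nth 1 s j)^-1 * (g * nth 1 s i)))].

Lemma rhoP g (i : 'I_n) : H ((nth 1 s (rho g i))^-1 * (g * nth 1 s i)).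
Proof.
rewrite /rho; case: pickP => [j /pbP //|no].
case: (cov (g * nth 1 s i)) => j lj hj.
by move: (no (Ordinal lj)) => /pbP [].
Qed.

Lemma rho_uniq g (i j : 'I_n) : H ((nth 1 s j)^-1 * (g * nth 1 s i)) -> rho g i = j.
Proof.
move=> hj; apply: val_inj; apply: dis; [exact: ltn_ord|exact: ltn_ord|].
have := HM (rhoP g i) (HV hj).
by rewrite !invMg invgK !mulgA !mulgK.
Qed.

Lemma rho_inj g : injective (rho g).
Proof.
move=> i i' e; apply: val_inj; apply: dis; [exact: ltn_ord|exact: ltn_ord|].
have := HM (HV (rhoP g i)) (rhoP g i'); rewrite e.
by rewrite !invMg invgK !mulgA mulgK mulgVK.
Qed.

Definition piA (g : G) : {perm 'I_n} := perm (@rho_inj g^-1).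

Lemma piAE g i : piA g i = rho g^-1 i.
Proof. by rewrite permE. Qed.

Lemma piA_hom : is_hom piA.
Proof.
move=> g h; apply/permP => i; rewrite permM !piAE.
apply: rho_uniq.
have := HM (rhoP h^-1 (rho g^-1 i)) (rhoP g^-1 i).
by rewrite invMg !mulgA mulgK.
Qed.

Lemma piA1 g : piA g = 1 <-> forall i : 'I_n, H ((nth 1 s i)^-1 * (g * nth 1 s i)).
Proof.
split.
- move=> e i; have : piA g i = i by rewrite e perm1.
  rewrite piAE => e2; have := HV (rhoP g^-1 i); rewrite e2.
  by rewrite !invMg !invgK !mulgA.
- move=> h; apply/permP => i; rewrite perm1 piAE; apply: rho_uniq.
  by have := HV (h i); rewrite !invMg !invgK !mulgA.
Qed.

Lemma ker_sub g : piA g = 1 -> H g.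
Proof.
move/piA1 => h; case: (cov 1) => i li; rewrite mulg1 => hi.
have := HM (HM (HV hi) (h (Ordinal li))) hi.
by rewrite /= invgK !mulgA mulgV mul1g mulgK.
Qed.

Definition ImA : {set {perm 'I_n}} := [set σ | pb (exists g, piA g = σ)].

Lemma memImA g : piA g \in ImA.
Proof. by rewrite inE; apply/pbP; exists g. Qed.

Lemma ImA_group : group_set ImA.
Proof.
apply/group_setP; split; first by rewrite inE; apply/pbP; exists 1; rewrite (hom1 piA_hom).
move=> a b; rewrite !inE => /pbP[g <-] /pbP[h <-].
by apply/pbP; exists (g * h); rewrite piA_hom.
Qed.

Canonical ImAG := Group ImA_group.

Definition TA := subg_of ImAG.

Definition piT (g : G) : TA := Subg (memImA g).

Lemma piT_hom : is_hom piT.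
Proof. by move=> g h; apply: val_inj; rewrite /= piA_hom. Qed.

Lemma piT_surj (y : TA) : exists g, piT g = y.
Proof.
case: y => a ha; have := ha; rewrite inE => /pbP[g e]; exists g; apply: val_inj => /=; exact: e.
Qed.

Lemma piT1 g : piT g = 1 <-> piA g = 1.
Proof. by split => [/(congr1 val) //| e]; apply: val_inj. Qed.

Lemma pre_subgroup (K : {group TA}) : is_subgroup (fun g => piT g \in K).
Proof.
split => /=.
- by rewrite (hom1 piT_hom).
- by move=> x y hx hy; rewrite piT_hom groupM.
- by move=> x hx; rewrite (homV piT_hom) groupV.
Qed.

Definition liftT (y : TA) : G := proj1_sig (constructive_indefinite_description _ (piT_surj y)).
Lemma liftTK y : piT (liftT y) = y.
Proof. exact: proj2_sig (constructive_indefinite_description _ (piT_surj y)). Qed.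

Lemma pre_index (K : {group TA}) : index_eq (fun g => piT g \in K) #|[set: TA] : K|.
Proof.
pose L := enum (lcosets K [set: TA]).
have szL : size L = #|[set: TA] : K| by rewrite -cardE card_lcosets.
have uL : uniq L := enum_uniq _.
pose r (C : {set TA}) := repr C.
have Lr i : i < size L -> r (nth set0 L i) *: K = nth set0 L i.
  move=> li; have : nth set0 L i \in lcosets K [set: TA] by rewrite -mem_enum mem_nth.
  case/lcosetsP => z _ ->; apply/lcoset_eqP; apply: mem_repr (lcoset_refl _ _).
exists (map (fun C => liftT (r C)) L); split.
- by rewrite size_map.
- move=> x; pose C := piT x *: K.
  have CL : C \in L by rewrite mem_enum mem_lcosets; apply/mulsgP; exists (piT x) 1; rewrite ?inE ?group1 ?mulg1.
  exists (index C L); first by rewrite -szL index_mem.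
  rewrite (nth_map set0) ?index_mem // nth_index //.
  rewrite piT_hom (homV piT_hom) liftTK.
  by rewrite -mem_lcoset /r lcoset_sym; apply: mem_repr (lcoset_refl _ _).
- move=> i j li lj; rewrite -szL in li lj.
  rewrite !(nth_map set0) // piT_hom (homV piT_hom) !liftTK => hK.
  apply/eqP; rewrite -(nth_uniq set0 li lj uL); apply/eqP.
  rewrite -(Lr i li) -(Lr j lj); apply/lcoset_eqP.
  by rewrite lcoset_sym mem_lcoset.
Qed.
End Act.
Set Implicit Arguments. Unset Strict Implicit. Unset Printing Implicit Defensive.
Local Open Scope group_scope.

Section Bridge.
Variable T : finGroupType.

Lemma pset_group (P : T -> Prop) : is_subgroup P -> group_set [set z | pb (P z)].
Proof.
case=> P1 PM PV; apply/group_setP; split; first by rewrite inE; apply/pbP.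
by move=> a b; rewrite !inE => /pbP ha /pbP hb; apply/pbP; apply: PM.
Qed.

Lemma Fitting_to (t : T) : Defs.Fitting t -> t \in 'F([set: T]).
Proof.
apply: (@gen_min _ _ (fun y => y \in 'F([set: T]))).
  by split => [|x y|x]; [apply: group1 | apply: groupM | rewrite groupV].
move=> y [K [[sK nK] [_ [n nil]] Ky]].
pose KS := Group (pset_group sK).
have KSP z : (z \in KS) = pb (K z) by rewrite inE.
suff : KS \subset 'F([set: T]) by move/subsetP; apply; rewrite KSP; apply/pbP.
apply: Fitting_max.
  apply/andP; split; first exact: subsetT.
  apply/subsetP => g _; rewrite inE; apply/subsetP => z; rewrite mem_conjg KSP.
  move/pbP => h; rewrite KSP; apply/pbP.
  by have := nK _ g h; rewrite conjgKV.
apply/lcnP; exists n.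
have ind k : 'L_k.+1(KS) \subset [set z | pb (lcs K k z)].
  elim: k => [|k IH]; first by apply/subsetP => z; rewrite lcn1 KSP ?inE.
  have gk := Group (pset_group (lcs_subgroup k.+1 sK)).
  rewrite lcnSn.
  have -> : [set z | pb (lcs K k.+1 z)] = gval (Group (pset_group (lcs_subgroup k.+1 sK))) by [].
  rewrite gen_subG; apply/subsetP => z /imset2P[a b aL bK ->].
  rewrite inE; apply/pbP; apply: gen_in; exists a, b; split => //.
    by have := subsetP IH a aL; rewrite inE => /pbP.
  by move: bK; rewrite KSP => /pbP.
apply/trivgP; apply/subsetP => z /(subsetP (ind n)); rewrite inE => /pbP /nil ->.
exact: group1.
Qed.

End Bridge.

Section Img.
Variables (G Q : groupType) (T : finGroupType) (f : G -> Q) (p : G -> T).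
Hypotheses (fH : is_hom f) (pH : is_hom p).

Definition img (A : {set T}) : Q -> Prop := fun q => exists g, f g = q /\ p g \in A.

Lemma img_subgroup (A : {group T}) : is_subgroup (img A).
Proof.
split.
- by exists 1; split; [exact: hom1 | rewrite (hom1 pH) group1].
- move=> x y [g [<- hg]] [h [<- hh]]; exists (g * h).
  by rewrite fH pH groupM.
- move=> x [g [<- hg]]; exists g^-1.
  by rewrite (homV fH) (homV pH) groupV.
Qed.

Lemma img_normal (A : {group T}) : A <| [set: T] -> (forall y, exists z, f z = y) ->
  is_normal (img A).
Proof.
move=> nA fs; split; first exact: img_subgroup.
move=> x r [g [<- hg]]; case: (fs r) => h <-; exists (g ^ h).
rewrite (homJ fH) (homJ pH); split => //.
by rewrite memJ_norm // (subsetP (normal_norm nA)) ?inE.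
Qed.

Lemma img_lcs (A : {group T}) k q : lcs (img A) k q -> img 'L_k.+1(A) q.
Proof.
elim: k q => [|k IH] q; first by [].
apply: gen_min; first exact: (img_subgroup 'L_k.+2(A)%G).
move=> z [a [b [/IH [g [<- hg]] [h [<- hh]] ->]]].
exists [~ g, h]; rewrite (homR fH) (homR pH); split => //.
by rewrite lcnSn mem_commg.
Qed.

End Img.

Lemma piT_ker (G : groupType) (H : G -> Prop) (n : nat) (s : seq G) (sH : is_subgroup H)
  (cov : forall x, exists2 i, i < n & H ((nth 1 s i)^-1 * x))
  (dis : forall i j, i < n -> j < n -> H ((nth 1 s i)^-1 * nth 1 s j) -> i = j) g :
  piT sH cov dis g = 1 -> H g.
Proof. by move/piT1; apply: ker_sub. Qed.

Theorem theorem1p5 (G : groupType) (x : G) :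
  S_set x <->
  (forall N : G -> Prop, is_normal N -> finite_index N -> F_N N x).
Proof.
split.
- move=> xS N nN [n [s [sz cov dis]]] Q f fH fs fk.
  have sN : is_subgroup N := nN.1.
  pose p := piT sN cov dis.
  have pH : is_hom p := piT_hom sN cov dis.
  have tF : p x \in 'F([set: TA sN cov dis]).
    apply: FB => K; rewrite -(homX pH).
    exact: xS (pre_subgroup K) (pre_index K).
  apply: gen_in; exists (img f p 'F([set: TA sN cov dis])); split.
  + by apply: img_normal => //; apply: Fitting_normal.
  + split; first exact: img_subgroup.
    have [c hc] := lcnP _ (Fitting_nil [set: TA sN cov dis]).
    exists c => q /(img_lcs fH pH) [g [<- hg]].
    move: hg; rewrite hc inE => /eqP /piT_ker hN.
    by apply/fk.
  + by exists x.
- move=> hF H m sH [s [sz cov dis]].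
  pose p := piT sH cov dis.
  have pH : is_hom p := piT_hom sH cov dis.
  pose N := fun g => p g \in [1 TA sH cov dis]%G.
  have nN : is_normal N.
    split; first exact: (pre_subgroup [1 TA sH cov dis]%G).
    move=> y g; rewrite /N !inE (homJ pH) => /eqP ->.
    by rewrite conj1g.
  have fN : finite_index N by exists #|[set: TA sH cov dis] : [1 TA sH cov dis]%G|; apply: pre_index.
  have := hF N nN fN (TA sH cov dis) p pH (fun y => piT_surj y).
  move=> /(_ _) hFit.
  have tF : p x \in 'F([set: TA sH cov dis]).
    apply: Fitting_to; apply: hFit => z; rewrite /N inE.
    by split => [/eqP|/eqP].
  pose K := [set t | pb (exists g, H g /\ p g = t)].
  have gK : group_set K.
    apply/group_setP; split.
      by rewrite inE; apply/pbP; exists 1; split; [case: (sH) | exact: hom1].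
    move=> a b; rewrite !inE => /pbP[g [hg <-]] /pbP[h [hh <-]].
    by apply/pbP; exists (g * h); split; [case: (sH) => _ HM _; apply: HM | rewrite pH].
  pose KG := Group gK.
  have KH g : p g \in KG <-> H g.
    split; last by move=> hg; rewrite inE; apply/pbP; exists g.
    rewrite inE => /pbP[h [hh e]].
    have h1 : p (h^-1 * g) = 1 by rewrite pH (homV pH) e mulVg.
    have := piT_ker h1; case: (sH) => _ HM _ hk.
    by have := HM _ _ hh hk; rewrite mulKVg.
  have ix := pre_index KG.
  have em : #|[set: TA sH cov dis] : KG| = m.
    have hm : index_eq H m by exists s.
    exact: idx_uniq sH (index_eq_ext KH ix) hm.
  rewrite -em; apply/KH; rewrite (homX pH); exact: FA.
Qed.
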